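(* Let $F_c$ be a family and let $w$ be a weight function on $\bigcup F_c$ (i.e., $w(a) > 0$ for some $a \in \bigcup F_c$). If $\mathrm{fs}(F', w, \bigcup F_c) \ge 0$ for every $F' \in \mathrm{uce}(F_c)$, then $F_c$ is an FC-family.
   Context: All sets and families (sets of sets) are finite. A family $F$ is union closed if $A\cup B\in F$ for all $A,B\in F$; it is union closed for $F_c$ if it is union closed and $A \cup B \in F$ for all $A \in F$, $B \in F_c$. The union closed extensions of $F_c$ are $\mathrm{uce}(F_c) = \{F' : F' \subseteq \mathcal{P}(\bigcup F_c),\ F' \text{ union closed for } F_c\}$. A family $F$ is Frankl's if there is $a \in \bigcup F$ with $2\cdot|\{A\in F: a\in A\}| \ge |F|$; $F_c$ is an FC-family if every union-closed family $F\supseteq F_c$ is Frankl's. A weight function is a map $w$ from elements to $\mathbb{N}$; it is a weight function on $A$ if $w(a)>0$ for some $a\in A$. $\mathrm{sw}(w,A)=\sum_{a\in A} w(a)$. The share of a set $A$ w.r.t. $w$ and a set $X$ is the integer $\mathrm{ss}(A,w,X) = 2\,\mathrm{sw}(w,A) - \mathrm{sw}(w,X)$, and the share of a family is $\mathrm{fs}(F,w,X)=\sum_{A\in F}\mathrm{ss}(A,w,X)$. *)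

(* Defs.v *)
From HB Require Import structures.
From mathcomp Require Import all_boot all_order all_algebra.
Set Implicit Arguments. Unset Strict Implicit. Unset Printing Implicit Defensive.
Import Order.TTheory GRing.Theory Num.Theory.

Definition union_closed (T : finType) (F : {set {set T}}) : Prop :=
  forall A B, A \in F -> B \in F -> A :|: B \in F.

Definition union_closed_for (T : finType) (F Fc : {set {set T}}) : Prop :=
  union_closed F /\ (forall A B, A \in F -> B \in Fc -> A :|: B \in F).

Definition uce (T : finType) (Fc : {set {set T}}) : {set {set {set T}}} :=
  [set F' : {set {set T}} | (F' \subset powerset (cover Fc)) &&
            [forall A in F', forall B in F', A :|: B \in F'] &&
            [forall A in F', forall B in Fc, A :|: B \in F']].

Definition Frankls (T : finType) (F : {set {set T}}) : Prop :=
  exists2 a, a \in cover F & #|F| <= 2 * #|[set A in F | a \in A]|.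

(* FC-family: every union-closed family F ⊇ Fc (over an arbitrary finite
   ground set, into which the ground set T of Fc is embedded injectively)
   is Frankl's. *)
Definition FC_family (T : finType) (Fc : {set {set T}}) : Prop :=
  forall (U : finType) (f : T -> U), injective f ->
  forall F : {set {set U}}, union_closed F ->
    [set f @: A | A : {set T} in Fc] \subset F -> Frankls F.

Definition weight_on (T : finType) (w : T -> nat) (A : {set T}) : Prop :=
  exists2 a, a \in A & 0 < w a.

Definition sw (T : finType) (w : T -> nat) (A : {set T}) : nat := \sum_(a in A) w a.

Definition ss (T : finType) (A : {set T}) (w : T -> nat) (X : {set T}) : int :=
  ((2 * sw w A)%:Z - (sw w X)%:Z)%R.

Definition fs (T : finType) (F : {set {set T}}) (w : T -> nat) (X : {set T}) : int :=
  (\sum_(A in F) ss A w X)%R.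

(* Main.v *)
Require Import Defs.
From HB Require Import structures.
From mathcomp Require Import all_boot all_order all_algebra.
From mathcomp Require Import zify.
Import Order.TTheory GRing.Theory Num.Theory.

Theorem theorem1 (T : finType) (Fc : {set {set T}}) (w : T -> nat) :
  weight_on w (cover Fc) ->
  (forall F' : {set {set T}}, F' \in uce Fc -> (0 <= fs F' w (cover Fc))%R) ->
  FC_family Fc.
Proof.
move=> [a0 a0C w0] Hfs U f finj F Fuc FcF.
set C := cover Fc; set X := f @: C.
pose g (A : {set U}) := C :&: f @^-1: A.
have gim : forall A : {set U}, f @: g A = X :&: A.
  move=> A; apply/setP => u; apply/imsetP/setIP.
    by case=> a; rewrite !inE => /andP[aC faA] ->; split=> //; apply: imset_f.
  by case=> /imsetP[a aC ->] faA; exists a => //; rewrite !inE aC.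
have key : forall K : {set U},
    (0 <= \sum_(A in F | A :\: X == K) ss (g A) w C)%R.
  move=> K.
  set D := [set A in F | A :\: X == K].
  have inj : {in D &, injective g}.
    move=> A B; rewrite !inE => /andP[_ /eqP AK] /andP[_ /eqP BK] gAB.
    rewrite -(setID A X) -(setID B X) AK BK (setIC A) (setIC B) -!gim gAB //.
  have -> : (\sum_(A in F | A :\: X == K) ss (g A) w C =
            \sum_(A in D) ss (g A) w C)%R.
    by apply: eq_bigl => A; rewrite inE.
  rewrite -(@big_imset _ _ _ _ _ g (mem D) (fun S => ss S w C) inj); apply: (Hfs (g @: D)).
  rewrite inE; apply/andP; split; first (apply/andP; split).
  - apply/subsetP => S /imsetP[A _ ->]; rewrite inE; exact: subsetIl.
  - apply/forall_inP => S1 /imsetP[A AD ->]; apply/forall_inP => S2 /imsetP[B BD ->].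
    move: AD BD; rewrite !inE => /andP[AF /eqP AK] /andP[BF /eqP BK].
    have -> : g A :|: g B = g (A :|: B) by rewrite /g preimsetU setIUr.
    apply: imset_f; rewrite inE Fuc //= setDUl AK BK setUid eqxx //.
  - apply/forall_inP => S1 /imsetP[A AD ->]; apply/forall_inP => B BFc.
    move: AD; rewrite !inE => /andP[AF /eqP AK].
    have BC : B \subset C by apply: bigcup_sup.
    have -> : g A :|: B = g (A :|: f @: B).
      rewrite /g preimsetU setIUr; congr (_ :|: _).
      apply/setP => a; rewrite !inE; apply/idP/andP.
        by move=> aB; split; [apply: (subsetP BC)|apply: imset_f].
      by case=> _ /imsetP[b bB /finj ->].
    apply: imset_f; rewrite inE Fuc //=; last first.
      by apply: (subsetP FcF); apply: imset_f.
    rewrite setDUl AK.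
    have -> : f @: B :\: X = set0.
      by apply/setP => u; rewrite !inE; case: (boolP (u \in f @: B)) => uB; rewrite ?andbF // (subsetP (imsetS f BC) _ uB).
    by rewrite setU0.
have tot : (0 <= \sum_(A in F) ss (g A) w C)%R.
  rewrite (partition_big (fun A => A :\: X) predT) //=.
  by apply: sumr_ge0 => K _; apply: key.
pose d u := #|[set A in F | u \in A]|.
have eqs : (\sum_(A in F) ss (g A) w C = (\sum_(A in F) 2 * sw w (g A))%:Z
     - (\sum_(A in F) sw w C)%:Z)%R.
  by rewrite /ss sumrB; congr (_ - _)%R; rewrite (big_morph Posz PoszD (erefl _)).
move: tot; rewrite eqs subr_ge0 lez_nat => tot.
have sg : forall A, sw w (g A) = \sum_(a in C) (f a \in A) * w a.
  move=> A; rewrite /sw big_mkcond [RHS]big_mkcond; apply: eq_bigr => a _.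
  by rewrite !inE; case: (a \in C); case: (f a \in A); rewrite ?mul1n ?mul0n.
have dE : forall u, \sum_(A in F) (u \in A : nat) = d u.
  move=> u; rewrite /d -sum1_card [RHS]big_mkcond [LHS]big_mkcond.
  by apply: eq_bigr => A _; rewrite inE; case: (A \in F); case: (u \in A).
have tot' : \sum_(a in C) #|F| * w a <= \sum_(a in C) 2 * d (f a) * w a.
  move: tot; rewrite sum_nat_const.
  have -> : \sum_(A in F) 2 * sw w (g A) = \sum_(a in C) 2 * d (f a) * w a.
    rewrite -big_distrr /=.
    rewrite (eq_bigr _ (fun A _ => sg A)).
    rewrite exchange_big /= big_distrr /=; apply: eq_bigr => a _.
    by rewrite -big_distrl /= dE mulnA.
  by rewrite -big_distrr.
have FC0 : 0 < #|F|.
  move/bigcupP: a0C => [B BFc _]; apply/card_gt0P; exists (f @: B).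
  by apply: (subsetP FcF); apply: imset_f.
case: (boolP [exists a in C, (0 < w a) && (#|F| <= 2 * d (f a))]).
  move=> /exists_inP[a aC /andP[wa Fd]]; exists (f a) => //.
  have : 0 < d (f a) by lia.
  move=> /card_gt0P[A]; rewrite inE => /andP[AF faA].
  by apply/bigcupP; exists A.
move=> /exists_inP H; exfalso.
have H' : forall a, a \in C -> 2 * d (f a) * w a <= #|F| * w a.
  move=> a aC; case: (posnP (w a)) => [->|wa]; first by rewrite !muln0.
  rewrite leq_mul2r; apply/orP; right; rewrite leqNgt; apply/negP => lt.
  by apply: H; exists a => //; rewrite wa /= ltnW.
have H0 : 2 * d (f a0) * w a0 < #|F| * w a0.
  rewrite ltn_mul2r w0 /= ltnNge; apply/negP => le.
  by apply: H; exists a0 => //; rewrite w0.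
move: tot'; rewrite (bigD1 a0) //= [X in _ <= X](bigD1 a0) //=.
have HS : \sum_(a in C | a != a0) 2 * d (f a) * w a <= \sum_(a in C | a != a0) #|F| * w a.
  by apply: leq_sum => a /andP[aC _]; apply: H'.
move: H0 HS; set p := 2 * d (f a0) * w a0; set q := #|F| * w a0; set r := \sum_(i in C | i != a0) 2 * d (f i) * w i; set s := \sum_(i in C | i != a0) #|F| * w i; lia.
Qed.
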